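(* If $H$ is a graph with $\gamma_I(H)=\gamma(H)=3$, then for any graph $G$, $\gamma_I(G\circ H)=\gamma_{(2,2,2,0)}(G)$.
   Context: All graphs are finite and simple; $N(v)$ denotes the open neighbourhood of a vertex $v$. For an integer $l\ge1$ and a vector $w=(w_0,\dots,w_l)$ of nonnegative integers with $w_0\ge 1$, a function $f:V(G)\to\{0,1,\dots,l\}$ is a $w$-dominating function on $G$ if $\sum_{u\in N(v)}f(u)\ge w_i$ for every vertex $v$ with $f(v)=i$ ($i=0,\dots,l$). The weight of $f$ is $\omega(f)=\sum_{v\in V(G)}f(v)$, and $\gamma_w(G)=\gamma_{(w_0,\dots,w_l)}(G)$ is the minimum weight of a $w$-dominating function on $G$. The Italian domination number is $\gamma_I(G)=\gamma_{(2,0,0)}(G)$, i.e., the minimum weight of $f:V(G)\to\{0,1,2\}$ with $\sum_{u\in N(v)}f(u)\ge 2$ for every $v$ with $f(v)=0$. $\gamma(H)$ is the domination number. The lexicographic product $G\circ H$ has vertex set $V(G)\times V(H)$, with $(u,v)(x,y)$ an edge iff $ux\in E(G)$, or $u=x$ and $vy\in E(H)$. *)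

(* Defs.v *)
From mathcomp Require Import all_boot all_order.
Set Implicit Arguments. Unset Strict Implicit. Unset Printing Implicit Defensive.

Definition simple_graph (T : finType) (e : rel T) : Prop :=
  symmetric e /\ irreflexive e.

Section Dom.
Variables (T : finType) (e : rel T).

Definition weight (l : nat) (f : {ffun T -> 'I_l}) : nat := \sum_(v : T) (f v : nat).

Definition nbsum (l : nat) (f : {ffun T -> 'I_l}) (v : T) : nat :=
  \sum_(u : T | e v u) (f u : nat).

(* w = [:: w_0; ...; w_l] (so l = size w - 1); f : V -> {0,..,l}
   is w-dominating iff every v with f v = i has neighbourhood sum >= w_i. *)
Definition w_dominating (w : seq nat) (f : {ffun T -> 'I_(size w)}) : bool :=
  [forall v, nth 0 w (f v) <= nbsum f v].

(* gamma_w(G): minimum weight of a w-dominating function.  (The default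
   value of the min, used only when no w-dominating function exists, is
   irrelevant for the vectors used below, for which one always exists.) *)
Definition gamma_w (w : seq nat) : nat :=
  \big[minn/((size w) * #|T|).+1]_(f : {ffun T -> 'I_(size w)} | w_dominating f)
     weight f.

Definition gamma_I : nat := gamma_w [:: 2; 0; 0].

Definition dominating (D : {set T}) : bool :=
  [forall v, (v \in D) || [exists u, (u \in D) && e v u]].

Definition gamma : nat := \big[minn/#|T|]_(D : {set T} | dominating D) #|D|.

End Dom.

Definition lexprod (T U : finType) (eG : rel T) (eH : rel U) : rel (T * U) :=
  fun p q => eG p.1 q.1 || ((p.1 == q.1) && eH p.2 q.2).

(* Main.v *)
Require Import Defs.
From mathcomp Require Import all_boot all_order.
From mathcomp Require Import zify.

Lemma bigmin_le (I : finType) (P : pred I) (F : I -> nat) d i :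
  P i -> \big[minn/d]_(j | P j) F j <= F i.
Proof.
move=> Pi; rewrite unlock /reducebig.
have : i \in index_enum I by rewrite mem_index_enum.
elim: (index_enum I) => [//|a s IH] /=; rewrite inE => /orP[/eqP<-|/IH h].
  by rewrite Pi geq_minl.
by case: (P a) => //; apply: leq_trans h; rewrite geq_minr.
Qed.

Lemma bigmin_attain (I : finType) (P : pred I) (F : I -> nat) d i :
  P i -> F i < d -> exists j, P j /\ \big[minn/d]_(k | P k) F k = F j.
Proof.
move=> Pi Fi.
have: \big[minn/d]_(k | P k) F k = d \/ exists j, P j /\ \big[minn/d]_(k | P k) F k = F j.
  apply: (big_ind (fun m => m = d \/ exists j, P j /\ m = F j)); first by left.
    by move=> x y Hx Hy /=; case: (leqP x y).
  by move=> j Pj; right; exists j.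
case=> // E; have := @bigmin_le I P F d i Pi; rewrite E; lia.
Qed.

Lemma sum_fst (T U : finType) (P : pred T) (F : T * U -> nat) :
  \sum_(p | P p.1) F p = \sum_(x | P x) \sum_(z : U) F (x, z).
Proof.
rewrite (pair_big_dep P (fun _ _ => true)) /=.
by apply: eq_big => [[x z]|[x z] _] /=; rewrite ?andbT.
Qed.

Lemma sum_sub (I : finType) (P Q : pred I) (F : I -> nat) :
  (forall i, P i -> Q i) -> \sum_(i | P i) F i <= \sum_(i | Q i) F i.
Proof.
move=> PQ; rewrite [X in X <= _]big_mkcond [X in _ <= X]big_mkcond /=.
apply: leq_sum => i _; case: (boolP (P i)) => Pi //; by rewrite PQ.
Qed.

Lemma minsum (I : finType) (P : pred I) (F : I -> nat) :
  minn 2 (\sum_(i | P i) F i) <= \sum_(i | P i) minn 3 (F i).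
Proof.
apply: (big_ind2 (fun a b => minn 2 a <= b)).
- by [].
- move=> x1 x2 y1 y2 h1 h2; lia.
- move=> i _; lia.
Qed.

Lemma gammaI_attain (V : finType) (e : rel V) :
  exists f : {ffun V -> 'I_3}, w_dominating e (w:=[:: 2; 0; 0]) f /\ gamma_I e = weight f.
Proof.
pose f1 : {ffun V -> 'I_3} := [ffun _ => inord 1].
have Pf1 : w_dominating e (w:=[:: 2; 0; 0]) f1.
  by apply/forallP => v; rewrite ffunE inordK.
have lt : weight f1 < (3 * #|V|).+1.
  rewrite /weight (eq_bigr (fun _ => 1)) ?sum1_card; first by rewrite (@eq_card _ _ V) //; lia.
  by move=> v _; rewrite ffunE inordK.
have [j [Pj E]] := @bigmin_attain _ _ (fun f => weight f) _ f1 Pf1 lt.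
by exists j.
Qed.

Lemma gamma4_attain (V : finType) (e : rel V) :
  exists f : {ffun V -> 'I_4}, w_dominating e (w:=[:: 2; 2; 2; 0]) f /\ gamma_w e [:: 2; 2; 2; 0] = weight f.
Proof.
pose f1 : {ffun V -> 'I_4} := [ffun _ => inord 3].
have Pf1 : w_dominating e (w:=[:: 2; 2; 2; 0]) f1.
  by apply/forallP => v; rewrite ffunE inordK.
have lt : weight f1 < (4 * #|V|).+1.
  rewrite /weight (eq_bigr (fun _ => 3)) ?sum_nat_const; first by rewrite (@eq_card _ _ V) //; lia.
  by move=> v _; rewrite ffunE inordK.
have [j [Pj E]] := @bigmin_attain _ _ (fun f => weight f) _ f1 Pf1 lt.
by exists j.
Qed.

Lemma dirB (U : finType) (eH : rel U) (T : finType) (eG : rel T) :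
  irreflexive eG -> gamma eH = 3 ->
  gamma_w eG [:: 2; 2; 2; 0] <= gamma_I (lexprod eG eH).
Proof.
move=> irrG hg.
have [g [gdom ->]] := @gammaI_attain _ (lexprod eG eH).
pose w u := \sum_(z : U) (g (u, z) : nat).
pose f : {ffun T -> 'I_4} := [ffun u => inord (minn 3 (w u))].
have fE : forall u, (f u : nat) = minn 3 (w u).
  by move=> u; rewrite ffunE inordK //; lia.
have wf : weight f <= weight g.
  rewrite /weight; under eq_bigr do rewrite fE.
  apply: (@leq_trans (\sum_u w u)); first by apply: leq_sum => u _; exact: geq_minr.
  rewrite /w pair_bigA /=; apply: eq_leq; apply: eq_bigr => -[x z] _ //.
have fdom : w_dominating eG (w:=[:: 2; 2; 2; 0]) f.
  apply/forallP => u; rewrite fE.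
  case: (leqP 3 (w u)) => hw //.
  apply: (@leq_trans 2); first by case: (w u) hw => [|[|[|]]].
  pose S := [set z | 0 < (g (u, z) : nat)].
  have cS : #|S| <= w u.
    rewrite -sum1_card.
    apply: (@leq_trans (\sum_(z in S) (g (u, z) : nat))).
      by apply: leq_sum => z; rewrite inE.
    by apply: sum_sub.
  have nd : ~~ dominating eH S.
    apply/negP => dS; have := @bigmin_le _ (dominating eH) (fun D => #|D|) #|U| S dS.
    rewrite -/(gamma eH) hg; lia.
  case/forallPn: nd => y; rewrite negb_or => /andP[yS /existsPn noz].
  have gy0 : (g (u, y) : nat) = 0.
    by move: yS; rewrite inE lt0n negbK => /eqP.
  have := forallP gdom (u, y); rewrite gy0 /= => H2.
  rewrite /nbsum; under eq_bigr do rewrite fE.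
  apply: (@leq_trans (minn 2 (\sum_(x | eG u x) w x))); last exact: minsum.
  suff : 2 <= \sum_(x | eG u x) w x by lia.
  apply: (leq_trans H2); rewrite /nbsum /w -(@sum_fst _ _ (fun x => eG u x) (fun p => (g p : nat))).
  rewrite [X in X <= _]big_mkcond [X in _ <= X]big_mkcond /=.
  apply: leq_sum => -[x z] _; rewrite /lexprod /=.
  case: (eG u x) => //=.
  case: (eqVneq u x) => [<-|] //=.
  case: (boolP (eH y z)) => // hyz.
  have := noz z; rewrite hyz andbT inE lt0n negbK => /eqP -> //.
apply: leq_trans wf.
exact: (@bigmin_le _ (w_dominating eG (w:=[:: 2; 2; 2; 0])) (fun f => weight f) _ f fdom).
Qed.

Lemma dirA (U : finType) (eH : rel U) (T : finType) (eG : rel T) :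
  gamma_I eH = 3 ->
  gamma_I (lexprod eG eH) <= gamma_w eG [:: 2; 2; 2; 0].
Proof.
move=> hI.
have [h [hdom hw]] := @gammaI_attain _ eH; rewrite hI in hw.
have [f [fdom ->]] := @gamma4_attain _ eG.
case: (pickP (@predT U)) => [y0 _|none]; last first.
  by move: hw; rewrite /weight big1 // => v _; have := none v.
pose g : {ffun T * U -> 'I_3} := [ffun p => if (f p.1 : nat) == 3 then h p.2
   else if p.2 == y0 then inord (f p.1) else ord0].
have wE : forall x, \sum_(z : U) (g (x, z) : nat) = f x.
  move=> x; case: (eqVneq (f x : nat) 3) => fx.
    under eq_bigr do rewrite ffunE /= fx eqxx.
    by rewrite fx; exact: (esym hw).
  rewrite (bigD1 y0) //= big1 => [|z zy]; last by rewrite ffunE /= (negbTE fx) (negbTE zy).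
  rewrite ffunE /= (negbTE fx) eqxx inordK ?addn0 //.
  have := ltn_ord (f x); lia.
have wg : weight g = weight f.
  rewrite /weight -(eq_bigr _ (fun x _ => wE x)) pair_bigA /=.
  by apply: eq_bigr => -[x z] _.
have gdom : w_dominating (lexprod eG eH) (w:=[:: 2; 0; 0]) g.
  apply/forallP => -[u y].
  case gy0: (g (u, y) : nat) => [|k]; last by case: k gy0 => [|[|k]] _ /=; rewrite ?nth_nil.
  rewrite /=.
  case: (eqVneq (f u : nat) 3) => fu.
    have hy0 : (h y : nat) = 0 by move: gy0; rewrite ffunE /= fu eqxx.
    have := forallP hdom y; rewrite hy0 /= => H2.
    apply: (leq_trans H2); rewrite /nbsum.
    have L : \sum_(p | (p.1 == u) && eH y p.2) (g p : nat) = \sum_(z | eH y z) (h z : nat).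
      transitivity (\sum_(x | x == u) \sum_(z | eH y z) (g (x, z) : nat)).
        by rewrite pair_big_dep; apply: eq_big => -[x z].
      rewrite big_pred1_eq; apply: eq_bigr => z _; by rewrite ffunE /= fu eqxx.
    rewrite -L; apply: sum_sub => -[x z] /= /andP[/eqP -> hz].
    by rewrite /lexprod /= eqxx hz orbT.
  have := forallP fdom u.
  have -> : nth 0 [:: 2; 2; 2; 0] (f u) = 2.
    have := ltn_ord (f u); move: fu; case: (nat_of_ord (f u)) => [|[|[|[|]]]] //.
  move=> H2; apply: (leq_trans H2); rewrite /nbsum.
  under eq_bigr do rewrite -wE.
  rewrite -(@sum_fst _ _ (fun x => eG u x) (fun p => (g p : nat))).
  by apply: sum_sub => -[x z] /= hx; rewrite /lexprod /= hx.
rewrite -wg.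
exact: (@bigmin_le _ (w_dominating (lexprod eG eH) (w:=[:: 2; 0; 0])) (fun f => weight f) _ g gdom).
Qed.

Theorem theorem3 (U : finType) (eH : rel U) :
  simple_graph eH ->
  gamma_I eH = 3 -> gamma eH = 3 ->
  forall (T : finType) (eG : rel T), simple_graph eG ->
    gamma_I (lexprod eG eH) = gamma_w eG [:: 2; 2; 2; 0].
Proof.
move=> _ hI hg T eG [_ irrG].
apply/eqP; rewrite eqn_leq dirA //=.
exact: dirB.
Qed.
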